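(* For every $n\ge 1$, the Poincar\'e series of $\mathrm{Kh}_{alg}(n,\infty;\mathbb{Z}/2)$ is $$P_{n}(q,t;\mathbb{Z}/2)=\prod_{i=0}^{n-1}\frac{1+q^{2i+4}t^{2i+1}}{1-q^{2i+2}t^{2i}}\ \prod_{i=0}^{\lfloor\frac{n-1}{2}\rfloor}\frac{1-q^{4i+4}t^{4i}}{1+q^{4i+4}t^{4i+1}}.$$
   Context: For a commutative ring $R$ and $n\ge1$, let $A_n(R)=R[x_0,\dots,x_{n-1}]\otimes_R\Lambda_R[\xi_0,\dots,\xi_{n-1}]$ be the free graded-commutative $R$-algebra on even generators $x_k$ and odd generators $\xi_k$ (odd generators anticommute and square to zero). It is bigraded by declaring $x_k$ to have $q$-degree $2k+2$ and $t$-degree $2k$, and $\xi_k$ to have $q$-degree $2k+4$ and $t$-degree $2k+1$. Let $d_2$ be the unique $R$-linear odd derivation (i.e. $d_2(ab)=d_2(a)b+(-1)^{|a|}a\,d_2(b)$, where $|a|$ is the number of $\xi$'s mod 2) with $d_2(x_k)=0$ and $d_2(\xi_k)=\sum_{i=0}^{k}x_ix_{k-i}$. Then $d_2^2=0$, $d_2$ preserves $q$-degree and lowers $t$-degree by 1. $\mathrm{Kh}_{alg}(n,\infty;R)$ denotes the homology $H(A_n(R),d_2)$, a bigraded $R$-algebra. For a field $F$ the Poincar\'e series is $\sum_{a,b}\dim_F \mathrm{Kh}_{alg}(n,\infty;F)^{a,b}\,q^a t^b$, where $a$ is the $q$-degree and $b$ the $t$-degree. *)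

(* Defs.v *)
From HB Require Import structures.
From mathcomp Require Import all_boot all_order all_algebra.
Set Implicit Arguments. Unset Strict Implicit. Unset Printing Implicit Defensive.
Import Order.TTheory GRing.Theory Num.Theory.
Local Open Scope ring_scope.

(* A basis monomial x^e xi_S is encoded by (e, S); xi_S means the product
   xi_{s_1} ... xi_{s_m} with s_1 < ... < s_m (x's written in front). *)
Definition mon (n : nat) := ({ffun 'I_n -> nat} * {set 'I_n})%type.

Definition mon0 (n : nat) : mon n := ([ffun => 0%N], set0).

Definition qdeg n (m : mon n) : nat :=
  (\sum_(k < n) (2 * k + 2) * m.1 k + \sum_(k in m.2) (2 * k + 4))%N.
Definition tdeg n (m : mon n) : nat :=
  (\sum_(k < n) (2 * k) * m.1 k + \sum_(k in m.2) (2 * k + 1))%N.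

(* Monomials of q-degree a have all exponents <= a, so this enumeration is complete. *)
Definition tomon n a (p : ({ffun 'I_n -> 'I_a.+1} * {set 'I_n})%type) : mon n :=
  ([ffun k => nat_of_ord (p.1 k)], p.2).

Definition basis n (a b : nat) : seq (mon n) :=
  [seq m <- [seq tomon p | p : ({ffun 'I_n -> 'I_a.+1} * {set 'I_n})%type]
     | (qdeg m == a) && (tdeg m == b)].

Definition addx n (e : {ffun 'I_n -> nat}) (i j : nat) : {ffun 'I_n -> nat} :=
  [ffun l : 'I_n => (e l + (val l == i) + (val l == j))%N].

(* Coefficient of the monomial m' in d_2(m), where d_2 is the odd derivation with
   d_2 x_k = 0, d_2 xi_k = sum_{i=0}^k x_i x_{k-i}:
     d_2(x^e xi_S) = sum_{k in S} (-1)^{#{j in S | j < k}} x^e (sum_{i=0}^k x_i x_{k-i}) xi_{S\k}. *)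
Definition dcoef (R : pzRingType) n (m m' : mon n) : R :=
  \sum_(k < n | (k \in m.2) && (m'.2 == m.2 :\ k))
     ((-1) ^+ #|[set j in m.2 | (j < k)%N]| *
      (\sum_(i < k.+1) ((m'.1 == addx m.1 i (k - i)%N) : nat)%:R))%R.

Definition dtgt n (a b : nat) : seq (mon n) :=
  if b is b'.+1 then basis n a b' else [::].

(* Matrix of d_2 : A^{a,b} -> A^{a,b-1} (row-vector convention: u *m Dmat). *)
Definition Dmat (R : pzRingType) n (a b : nat) :
    'M[R]_(size (basis n a b), size (dtgt n a b)) :=
  \matrix_(i, j) dcoef R (nth (mon0 n) (basis n a b) i) (nth (mon0 n) (dtgt n a b) j).

(* dim_F of Kh_alg(n, oo; F)^{a,b} = dim ( ker(d_2 on A^{a,b}) / im(d_2 : A^{a,b+1} -> A^{a,b}) ).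
   (The image is intersected with the kernel; it is contained in it since d_2^2 = 0.) *)
Definition Hdim (F : fieldType) n (a b : nat) : nat :=
  (\rank (kermx (Dmat F n a b))
   - \rank (kermx (Dmat F n a b) :&: Dmat F n a b.+1)%MS)%N.

Definition ps := nat -> nat -> int.
Definition ps1 : ps := fun a b => ((a == 0%N) && (b == 0%N) : nat)%:Z.
Definition psmul (f g : ps) : ps := fun a b =>
  (\sum_(i < a.+1) \sum_(j < b.+1) f i j * g (a - i)%N (b - j)%N)%R.
Definition ps1p (c : int) (al be : nat) : ps := fun a b =>
  (ps1 a b + if (a == al) && (b == be) then c else 0)%R.
(* 1/(1 - c q^al t^be) = sum_k c^k q^{k al} t^{k be}  (used only with al > 0) *)
Definition psgeom (c : int) (al be : nat) : ps := fun a b =>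
  if ((al %| a)%N && (b == (a %/ al) * be)%N) then (c ^+ (a %/ al)%N)%R else 0%R.

Definition Pseries (n : nat) : ps :=
  psmul
    (\big[psmul/ps1]_(i < n)
        psmul (ps1p 1 (2 * i + 4) (2 * i + 1)) (psgeom 1 (2 * i + 2) (2 * i)))
    (\big[psmul/ps1]_(i < (n.-1)./2.+1)
        psmul (ps1p (-1) (4 * i + 4) (4 * i)) (psgeom (-1) (4 * i + 4) (4 * i + 1))).

(* Main.v *)
Require Import Defs.
From HB Require Import structures.
From mathcomp Require Import all_boot all_order all_algebra.
From mathcomp Require Import zify ring.
Set Implicit Arguments. Unset Strict Implicit. Unset Printing Implicit Defensive.
Import Order.TTheory GRing.Theory Num.Theory.
Local Open Scope ring_scope.


Notation F2 := [the fieldType of 'F_2].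

Lemma F2_2 : (2%:R : F2) = 0. Proof. exact: val_inj. Qed.
Lemma F2_m1 : (-1 : F2) = 1. Proof. exact: val_inj. Qed.
Lemma F2_nat (k : nat) : (k%:R : F2) = (odd k)%:R.
Proof.
elim: k => // k IH; rewrite [_.+1%:R]mulrS IH /=.
by case: (odd k) => /=; rewrite ?addr0 // -[1 + 1]/(2%:R) F2_2.
Qed.

Section P1.
Variable n : nat.
Implicit Types (m mu nu : mon n).

Lemma halfn_le (k : nat) : (k./2 <= k)%N.
Proof. by rewrite leq_half_double; lia. Qed.

Definition hf (k : 'I_n) : 'I_n := Ordinal (leq_ltn_trans (halfn_le k) (ltn_ord k)).

Lemma addxC (e : {ffun 'I_n -> nat}) i j : addx e i j = addx e j i.
Proof. by apply/ffunP => l; rewrite !ffunE addnAC. Qed.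

Lemma addx_inj (e : {ffun 'I_n -> nat}) (i j i' j' : nat) :
  (i < n)%N -> (j < n)%N ->
  addx e i j = addx e i' j' -> ((i == i') && (j == j')) || ((i == j') && (j == i')).
Proof.
move=> hi hj H.
have h1 := congr1 (fun f : {ffun 'I_n -> nat} => f (Ordinal hi)) H.
have h2 := congr1 (fun f : {ffun 'I_n -> nat} => f (Ordinal hj)) H.
rewrite /= !ffunE /= eqxx in h1 h2.
case: (eqVneq i i') h1 h2 => [<-|ne] h1 h2.
  by rewrite /=; case: (eqVneq j j') h2 => //; case: (j == i) => /=; lia.
have : i == j' by move: h1; case: (i == j'); case: (i == j) => /=; lia.
move/eqP=> eij; subst j'; rewrite eqxx /=.
move: h2; rewrite (eq_sym j i); case: (j == i); case: (j == i') => /=; lia.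
Qed.

Lemma inner (e f : {ffun 'I_n -> nat}) (k : 'I_n) :
  (\sum_(i < k.+1) ((f == addx e i (k - i)) : nat)%:R : F2)
  = ((~~ odd k) && (f == addx e k./2 k./2))%:R.
Proof.
rewrite -natr_sum.
have -> : (\sum_(i < k.+1) ((f == addx e i (k - i)) : nat))%N
         = #|[pred i : 'I_k.+1 | f == addx e i (k - i)]|.
  rewrite -sum1_card [RHS]big_mkcond /=; apply: eq_bigr => i _; rewrite inE; by case: ifP.
have hkn := ltn_ord k.
have hk2 : (k./2 < k.+1)%N by rewrite ltnS halfn_le.
case: (boolP [exists i : 'I_k.+1, f == addx e i (k - i)]) => [/existsP [i0 /eqP Hi0]|Hno].
  have hi0 : (i0 < n)%N by apply: leq_ltn_trans hkn; rewrite -ltnS.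
  have hki0 : (k - i0 < n)%N by apply: leq_ltn_trans hkn; exact: leq_subr.
  have Erev : val (rev_ord i0) = (k - i0)%N by rewrite /= subSS.
  rewrite (eq_card (B := pred2 i0 (rev_ord i0))); last first.
    move=> i /=; rewrite Hi0 inE; apply/idP/idP.
      move/eqP => H; have := addx_inj hi0 hki0 H; case/orP=> [/andP[/eqP h _]|/andP[_ /eqP h]].
        by apply/orP; left; apply/eqP/val_inj.
      by apply/orP; right; apply/eqP/val_inj; rewrite Erev.
    case/orP=> /eqP ->; first by [].
    by rewrite Erev addxC; have -> : (k - (k - i0) = i0)%N by have := ltn_ord i0; lia.
  rewrite card2 F2_nat /=.
  case: (eqVneq i0 (rev_ord i0)) => [E|NE] /=.
    have E' : (i0 = k - i0 :> nat)%N by rewrite -Erev {1}E.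
    have hik : (i0 <= k)%N by rewrite -ltnS.
    have Ek : (k : nat) = i0.*2 by rewrite -addnn; lia.
    have ev : ~~ odd k by rewrite [X in odd X]Ek odd_double.
    have h2 : (k./2 = i0)%N by rewrite [X in X./2]Ek doubleK.
    by rewrite ev h2 Hi0 -E' eqxx.
  case: (boolP (odd k)) => //= ev.
  case: eqP => // /esym.
  rewrite Hi0 => /addx_inj; rewrite !(leq_ltn_trans (halfn_le k) hkn) => /(_ isT isT).
  move=> H; exfalso; have : i0 = rev_ord i0.
    by apply/val_inj; rewrite Erev; case/orP: H => /andP[/eqP h1 /eqP h2]; move: h1 h2; generalize (k./2) => x; rewrite [val i0]/=; lia.
  by move=> E; rewrite -E eqxx in NE.
have -> : #|[pred i : 'I_k.+1 | f == addx e i (k - i)]| = 0%N.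
  apply: eq_card0 => i /=; apply/negP => Hi.
  by move/existsP: Hno; apply; exists i.
case: (boolP (odd k)) => //= ev; case: eqP => // Hf.
move/existsP: Hno; case; exists (Ordinal hk2); rewrite /= Hf.
have Ek := odd_double_half k; rewrite (negbTE ev) add0n in Ek.
by have -> : (k - k./2 = k./2)%N by rewrite -{1}Ek -addnn addnK.
Qed.
End P1.


Section P1b.
Variable n : nat.
Implicit Types (m mu nu : mon n).

Definition ok (k : 'I_n) m := (k \in m.2) && ~~ odd k.
Definition dpart (k : 'I_n) m : mon n := (addx m.1 k./2 k./2, m.2 :\ k).

Lemma dcoefE m m' :
  dcoef F2 m m' = \sum_(k < n) (ok k m && (m' == dpart k m))%:R.
Proof.
rewrite /dcoef big_mkcond /=; apply: eq_bigr => k _.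
rewrite /ok /dpart; case: (boolP (k \in m.2)) => hk //=.
case: m' => [e' S'] /=. rewrite xpair_eqE /=.
case: (eqVneq S' (m.2 :\ k)) => hS; last by rewrite !andbF.
by rewrite F2_m1 expr1n mul1r inner andbT.
Qed.

Lemma sum_delta (g : nat -> nat) (j : 'I_n) :
  (\sum_(l < n) g l * (val l == val j) = g j)%N.
Proof.
rewrite (bigD1 j) //= eqxx muln1 big1 ?addn0 // => l hl.
by rewrite (inj_eq val_inj) (negbTE hl) muln0.
Qed.

Lemma sum_addx (c : nat -> nat) (e : {ffun 'I_n -> nat}) (k : 'I_n) :
  (\sum_(l < n) c l * addx e k./2 k./2 l = \sum_(l < n) c l * e l + c k./2 * 2)%N.
Proof.
rewrite (eq_bigr (fun l : 'I_n => c l * e l + (c l * 2) * (val l == val (hf k)))%N); last first.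
  by move=> l _; rewrite ffunE /= -addnA addnn -mul2n mulnDr mulnA.
by rewrite big_split (sum_delta (fun l => c l * 2)%N (hf k)).
Qed.

Lemma qdeg_d k m : ok k m -> qdeg (dpart k m) = qdeg m.
Proof.
case/andP=> hk ev; rewrite /qdeg /dpart /= (sum_addx (fun l => 2 * l + 2)%N) (big_setD1 k hk) /=.
have Ek := odd_double_half k; rewrite (negbTE ev) add0n in Ek.
rewrite -mul2n in Ek; move: Ek; generalize (k./2) => x <-; rewrite [RHS]addnA; congr (_ + _ + _); lia.
Qed.

Lemma tdeg_d k m : ok k m -> tdeg m = (tdeg (dpart k m)).+1.
Proof.
case/andP=> hk ev; rewrite /tdeg /dpart /= (sum_addx (fun l => 2 * l)%N) (big_setD1 k hk) /=.
have Ek := odd_double_half k; rewrite (negbTE ev) add0n in Ek.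
rewrite -mul2n in Ek; move: Ek; generalize (k./2) => x <-; rewrite addnA -addSn -addnS; congr (_ + _ + _); lia.
Qed.

Lemma exp_le_qdeg m (l : 'I_n) : (m.1 l <= qdeg m)%N.
Proof.
rewrite /qdeg; apply: leq_trans (leq_addr _ _).
rewrite (bigD1 l) //=; apply: leq_trans (leq_addr _ _); apply: leq_pmull; lia.
Qed.

Lemma mem_basis a b m : (m \in basis n a b) = (qdeg m == a) && (tdeg m == b).
Proof.
rewrite mem_filter; case: (boolP ((qdeg m == a) && (tdeg m == b))) => //= /andP[/eqP hq _].
have hb : forall l, (m.1 l < a.+1)%N by move=> l; rewrite ltnS -hq exp_le_qdeg.
apply/imageP; exists ([ffun l => Ordinal (hb l)], m.2); first by [].
by case: m hb hq => e S hb hq; rewrite /tomon /=; congr (_, _); apply/ffunP => l; rewrite !ffunE.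
Qed.

Lemma uniq_basis a b : uniq (basis n a b).
Proof.
apply: filter_uniq; rewrite /image_mem map_inj_uniq ?enum_uniq //.
move=> [f S] [f' S'] /= [] Ef ->; congr (_, _); apply/ffunP => l.
by apply/val_inj; have := congr1 (fun g : {ffun 'I_n -> nat} => g l) Ef; rewrite !ffunE.
Qed.

End P1b.


Section P1c.
Variable n : nat.
Implicit Types (m mu nu : mon n).

Definition bad m (k : 'I_n) := ~~ odd k && ((k \in m.2) || (1 < m.1 (hf k)))%N.
Definition piv m := [pick k | bad m k & [forall j : 'I_n, (j < k)%N ==> ~~ bad m j]].

Lemma pivP m k : piv m = Some k <-> bad m k /\ (forall j : 'I_n, (j < k)%N -> ~~ bad m j).
Proof.
rewrite /piv; case: pickP => [k' /andP[bk' /forallP mk']|H]; split.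
- by case=> <-; split=> // j; apply/implyP/mk'.
- case=> bk mk; congr Some; apply/val_inj/eqP; rewrite eqn_leq.
  apply/andP; split; rewrite leqNgt; apply/negP => lt.
    by move: (mk' k); rewrite lt bk.
  by move: (mk _ lt); rewrite bk'.
- by [].
- case=> bk mk; move: (H k); rewrite bk /=; move/negbT/negP; case.
  by apply/forallP => j; apply/implyP/mk.
Qed.

Lemma pivN m : piv m = None <-> (forall k, ~~ bad m k).
Proof.
split; last first.
  move=> H; rewrite /piv; case: pickP => // k /andP[bk _]; by move: (H k); rewrite bk.
move=> H k; apply/negP => bk.
case: (arg_minnP (fun j : 'I_n => val j) bk) => j bj mj.
have : piv m = Some j.
  apply/pivP; split=> // i lt; apply/negP => bi; by move: (mj _ bi); rewrite leqNgt lt.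
by rewrite H.
Qed.

Definition up m := if piv m is Some k then k \in m.2 else false.
Definition down m := if piv m is Some k then k \notin m.2 else false.
Definition crit m := piv m == None.

Lemma ok_bad m k : ok k m -> bad m k.
Proof. by case/andP=> hk ev; rewrite /bad ev hk. Qed.

Lemma ev_half (k : nat) : ~~ odd k -> (k./2).*2 = k.
Proof. by move=> ev; have := odd_double_half k; rewrite (negbTE ev) add0n. Qed.

Lemma bad_d m k j : ok k m -> j != k -> bad (dpart k m) j = bad m j.
Proof.
case/andP=> hk ev jk; rewrite /bad /dpart /= in_setD1 jk /=.
case: (boolP (odd j)) => //= evj; congr (_ || _).
rewrite ffunE /=.
have -> : (j./2 == k./2) = false.
  apply/negP => /eqP e; move: jk; rewrite -(inj_eq val_inj) /=.
  by rewrite -(ev_half evj) -(ev_half ev) e eqxx.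
by rewrite !addn0.
Qed.

Lemma bad_dk m k : ok k m -> bad (dpart k m) k.
Proof. case/andP=> hk ev; rewrite /bad /dpart /= ev ffunE /= eqxx /=; apply/orP; right; lia. Qed.

Lemma notin_dk m k : k \notin (dpart k m).2.
Proof. by rewrite /dpart /= in_setD1 eqxx. Qed.

Lemma piv_d m k k0 : piv m = Some k0 -> ok k m -> k != k0 -> piv (dpart k m) = Some k0.
Proof.
move=> /pivP [b0 m0] okk kk0; apply/pivP; split.
  by rewrite bad_d // eq_sym.
have k0k : (k0 <= k)%N by rewrite leqNgt; apply/negP => lt; move: (m0 _ lt); rewrite ok_bad.
move=> j lt; rewrite bad_d ?m0 //; apply/negP => /eqP e; by move: lt; rewrite e ltnNge k0k.
Qed.

Lemma piv_dk m k : piv m = Some k -> ok k m -> piv (dpart k m) = Some k.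
Proof.
move=> /pivP [b0 m0] okk; apply/pivP; split; first exact: bad_dk.
move=> j lt; rewrite bad_d ?m0 //; apply/negP => /eqP e; by move: lt; rewrite e ltnn.
Qed.

Lemma piv_ok m k : piv m = Some k -> k \in m.2 -> ok k m.
Proof. by move/pivP=> [/andP[ev _] _] hk; rewrite /ok hk ev. Qed.

Lemma up_d m k k0 : piv m = Some k0 -> k0 \in m.2 -> ok k m -> k != k0 -> up (dpart k m).
Proof.
move=> p0 h0 okk kk0; rewrite /up (piv_d p0 okk kk0) /dpart /= in_setD1 h0 andbT.
by rewrite eq_sym.
Qed.

Lemma down_dk m k : piv m = Some k -> k \in m.2 -> down (dpart k m).
Proof. move=> p hk; rewrite /down (piv_dk p (piv_ok p hk)); exact: notin_dk. Qed.

Lemma notcrit_d m k : ok k m -> ~~ crit (dpart k m).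
Proof.
move=> okk; rewrite /crit; apply/negP => /eqP /pivN /(_ k).
by rewrite bad_dk.
Qed.

Lemma crit_nok m k : crit m -> ok k m = false.
Proof. by move=> /eqP /pivN /(_ k) nb; apply/negP => /ok_bad; rewrite (negbTE nb). Qed.

Definition partner m := if piv m is Some k then dpart k m else m.
Definition subx (e : {ffun 'I_n -> nat}) (j : nat) : {ffun 'I_n -> nat} :=
  [ffun l : 'I_n => e l - 2 * (val l == j)]%N.
Definition upart (k : 'I_n) m : mon n := (subx m.1 k./2, k |: m.2).

Lemma upart_d m k : ok k m -> upart k (dpart k m) = m.
Proof.
case/andP=> hk ev; case: m hk => e S hk; rewrite /upart /dpart /=; congr (_, _).
  by apply/ffunP => l; rewrite !ffunE; case: (val l == _) => /=; lia.
by rewrite setD1K.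
Qed.

Lemma d_upart m k : piv m = Some k -> k \notin m.2 ->
  ok k (upart k m) /\ dpart k (upart k m) = m.
Proof.
move=> /pivP [/andP[ev hb] _] hk; rewrite (negbTE hk) /= in hb.
split; first by rewrite /ok /upart /= setU11 ev.
case: m hk hb => e S hk hb; rewrite /upart /dpart /=; congr (_, _); last by rewrite setU1K.
apply/ffunP => l; rewrite !ffunE.
case: (eqVneq (val l) k./2) => [E|NE]; last by rewrite !muln0 subn0 !addn0.
have -> : l = hf k by apply/val_inj.
rewrite /=; move: hb => /= hb; lia.
Qed.

Lemma piv_upart m k : piv m = Some k -> k \notin m.2 -> piv (upart k m) = Some k.
Proof.
move=> p hk; have [okk E] := d_upart p hk.
move/pivP: p => [b0 m0]; apply/pivP; split; first exact: ok_bad.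
move=> j lt; have jk : j != k by apply/negP => /eqP e; by move: lt; rewrite e ltnn.
by rewrite -(bad_d okk jk) E m0.
Qed.

Lemma up_partner m : up m -> down (partner m).
Proof. rewrite /up /partner; case E: (piv m) => [k|] // hk; exact: down_dk. Qed.

Lemma down_upart m k : piv m = Some k -> down m -> up (upart k m) /\ partner (upart k m) = m.
Proof.
move=> p; rewrite /down p => hk; have [okk E] := d_upart p hk.
by rewrite /up /partner (piv_upart p hk) setU11 E.
Qed.

Lemma partner_inj m m' : up m -> up m' -> partner m = partner m' -> m = m'.
Proof.
rewrite /up /partner; case E: (piv m) => [k|] // hk; case E': (piv m') => [k'|] // hk' P.
have ok1 := piv_ok E hk; have ok2 := piv_ok E' hk'.
have E1 := piv_dk E ok1; have E2 := piv_dk E' ok2.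
rewrite P E2 in E1; case: E1 => e; subst k'.
by rewrite -(upart_d ok1) P upart_d.
Qed.

Lemma partner_deg m : up m -> qdeg (partner m) = qdeg m /\ tdeg m = (tdeg (partner m)).+1.
Proof.
rewrite /up /partner; case E: (piv m) => [k|] // hk; have okk := piv_ok E hk.
by split; [exact: qdeg_d | exact: tdeg_d].
Qed.

Lemma updown m : up m -> down m = false.
Proof. by rewrite /up /down; case: (piv m) => // k ->. Qed.
Lemma upcrit m : up m -> crit m = false.
Proof. by rewrite /up /crit; case: (piv m). Qed.
Lemma downcrit m : down m -> crit m = false.
Proof. by rewrite /down /crit; case: (piv m). Qed.
Lemma trichot m : [|| up m, down m | crit m].
Proof. by rewrite /up /down /crit; case: (piv m) => // k; case: (k \in m.2). Qed.

Lemma dcoef_crit m m' : crit m -> dcoef F2 m m' = 0.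
Proof. by move=> c; rewrite dcoefE big1 // => k _; rewrite crit_nok. Qed.

Lemma dcoef_up_down m m' : up m -> down m' -> dcoef F2 m m' = (m' == partner m)%:R.
Proof.
move=> u d; move: (u); rewrite /up /partner; case E: (piv m) => [k0|] // hk0.
rewrite dcoefE (bigD1 k0) //= piv_ok // big1 ?addr0 // => k kk0.
case: (boolP (ok k m)) => //= okk; case: eqP => // e.
by have := up_d E hk0 okk kk0; rewrite -e => H; rewrite (updown H) in d.
Qed.

Lemma dcoef_up_crit m m' : up m -> crit m' -> dcoef F2 m m' = 0.
Proof.
move=> u c; rewrite dcoefE big1 // => k _.
case: (boolP (ok k m)) => //= okk; case: eqP => // e.
by move: (notcrit_d okk); rewrite -e c.
Qed.

End P1c.


Lemma seq_delta (T : eqType) (s : seq T) (x : T) (G : T -> F2) :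
  uniq s -> x \in s -> \sum_(y <- s) (y == x)%:R * G y = G x.
Proof.
move=> us xs; rewrite (bigD1_seq x) //= eqxx mul1r big1 ?addr0 // => y /negbTE ->.
by rewrite mul0r.
Qed.

Lemma seq_delta' (T : eqType) (s : seq T) (x : T) (G : T -> F2) :
  uniq s -> x \in s -> \sum_(y <- s) G y * (y == x)%:R = G x.
Proof. by move=> us xs; rewrite -(seq_delta G us xs); apply: eq_bigr => y _; rewrite mulrC. Qed.

Lemma sum_nth (T : Type) (x0 : T) (s : seq T) (G : T -> F2) :
  \sum_(j < size s) G (nth x0 s j) = \sum_(y <- s) G y.
Proof. by rewrite (big_nth x0) big_mkord. Qed.

Lemma ord_delta (m : nat) (j0 : 'I_m) (G : 'I_m -> F2) :
  \sum_(j < m) (j == j0)%:R * G j = G j0.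
Proof. by rewrite (bigD1 j0) //= eqxx mul1r big1 ?addr0 // => j /negbTE ->; rewrite mul0r. Qed.

Lemma card_nth (T : Type) (x0 : T) (s : seq T) (P : pred T) :
  #|[set i : 'I_(size s) | P (nth x0 s i)]| = count P s.
Proof.
rewrite -sum1dep_card -sum1_count (big_nth x0) big_mkord.
by apply: eq_bigl => i.
Qed.

Lemma sym_sum0 (m : nat) (B : 'I_m -> 'I_m -> bool) :
  (forall k, B k k = false) -> (forall k k', B k k' = B k' k) ->
  \sum_(k < m) \sum_(k' < m) (B k k')%:R = 0 :> F2.
Proof.
move=> Bd Bs.
have E : forall k k' : 'I_m, nat_of_bool (B k k') =
    (nat_of_bool ((k < k')%N && B k k') + nat_of_bool ((k' < k)%N && B k k'))%N.
  move=> k k'; case: (ssrnat.ltngtP k k') => e /=; rewrite ?addn0 //.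
  have ekk : k = k' by apply: val_inj.
  by subst k'; rewrite Bd.
under eq_bigr do rewrite -natr_sum.
rewrite -natr_sum F2_nat.
under eq_bigr do under eq_bigr do rewrite E.
under eq_bigr do rewrite big_split /=.
rewrite big_split /= [X in (_ + X)%N]exchange_big /=.
have -> : (\sum_(j < m) \sum_(i < m) ((j < i)%N && B i j : nat) =
           \sum_(i < m) \sum_(j < m) ((i < j)%N && B i j : nat))%N.
  by apply: eq_bigr => i _; apply: eq_bigr => j _; rewrite Bs.
by rewrite addnn odd_double.
Qed.

Section P1d.
Variables n a : nat.
Local Notation s b := (basis n a b).
Local Notation D b := (Dmat F2 n a b).
Local Notation nu0 := (mon0 n).

Lemma dpart_mem b (m : mon n) (k : 'I_n) : m \in s b.+1 -> ok k m -> dpart k m \in s b.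
Proof.
rewrite !mem_basis => /andP[/eqP hq /eqP ht] okk.
by rewrite (qdeg_d okk) hq eqxx /=; move: ht; rewrite (tdeg_d okk) => -[->].
Qed.

Lemma dpart_comm (m : mon n) (k k' : 'I_n) : ok k m -> ok k' (dpart k m) ->
  ok k' m /\ ok k (dpart k' m) /\ dpart k' (dpart k m) = dpart k (dpart k' m).
Proof.
rewrite /ok /dpart /= in_setD1 => /andP[hk ek] /andP[/andP[kk hk'] ek'].
rewrite hk' ek' in_setD1 eq_sym kk hk ek; do 2!split=> //.
congr (_, _); first by apply/ffunP => l; rewrite !ffunE; lia.
by apply/setP => l; rewrite !in_setD1 andbCA.
Qed.

Lemma d2 b : D b.+1 *m D b = 0.
Proof.
apply/matrixP => i l; rewrite !mxE.
set nu := nth nu0 (s b.+1) i; set rho := nth nu0 (dtgt n a b) l.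
have nus : nu \in s b.+1 by apply: mem_nth.
under eq_bigr do rewrite !mxE.
rewrite (sum_nth nu0 (s b) (fun y => dcoef F2 nu y * dcoef F2 y rho)).
under eq_bigr do rewrite dcoefE mulr_suml.
rewrite exchange_big /=.
have -> : \sum_(k < n) \sum_(y <- s b) ((ok k nu && (y == dpart k nu))%:R * dcoef F2 y rho)
  = \sum_(k < n) \sum_(k' < n) ((ok k nu && ok k' (dpart k nu)) && (rho == dpart k' (dpart k nu)))%:R.
  apply: eq_bigr => k _; case: (boolP (ok k nu)) => okk /=.
    rewrite seq_delta ?uniq_basis ?dpart_mem // dcoefE; apply: eq_bigr => k' _.
    by rewrite andbA.
  rewrite big1; last by move=> y _; rewrite mul0r.
  by rewrite big1.
apply: sym_sum0 => [k|k k'].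
  by apply/negP => /andP[/andP[_ /andP[]]]; rewrite (negbTE (notin_dk _ _)).
case: (boolP (ok k nu && ok k' (dpart k nu))) => [/andP[o1 o2]|H] /=.
  have [o3 [o4 ->]] := dpart_comm o1 o2; by rewrite o3 o4.
case: (boolP (ok k' nu && ok k (dpart k' nu))) => [/andP[o1 o2]|//] /=.
have [o3 [o4 _]] := dpart_comm o1 o2; by rewrite o3 o4 in H.
Qed.

End P1d.


Section P1e.
Variables n a : nat.
Local Notation s b := (basis n a b).
Local Notation D b := (Dmat F2 n a b).
Local Notation nu0 := (mon0 n).

Definition Up b := [set i : 'I_(size (s b)) | up (nth nu0 (s b) i)].
Definition Cr b := [set i : 'I_(size (s b)) | crit (nth nu0 (s b) i)].

Lemma uniq_dtgt b : uniq (dtgt n a b).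
Proof. by case: b => [|b] //; exact: uniq_basis. Qed.

Lemma partner_mem b (m : mon n) : m \in s b -> up m -> partner m \in dtgt n a b.
Proof.
rewrite mem_basis => /andP[/eqP hq /eqP ht] u; have [q t] := partner_deg u.
case: b ht => [|b] ht; first by rewrite t in ht.
by rewrite /dtgt mem_basis q hq eqxx /=; move: ht; rewrite t => -[->].
Qed.

Lemma nth_up b (u : 'I_#|Up b|) : up (nth nu0 (s b) (enum_val u)).
Proof. by have := enum_valP u; rewrite inE. Qed.
Lemma nth_cr b (u : 'I_#|Cr b|) : crit (nth nu0 (s b) (enum_val u)).
Proof. by have := enum_valP u; rewrite inE. Qed.

Lemma nth_up_inj b (u u' : 'I_#|Up b|) :
  (partner (nth nu0 (s b) (enum_val u')) == partner (nth nu0 (s b) (enum_val u))) = (u == u').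
Proof.
apply/eqP/eqP => [E|->] //; apply: enum_val_inj; apply: val_inj; apply/eqP.
rewrite -(nth_uniq nu0 (ltn_ord _) (ltn_ord _) (uniq_basis n a b)).
by rewrite (partner_inj (nth_up u) (nth_up u') (esym E)).
Qed.

Lemma rank_lb b : (#|Up b| <= \rank (D b))%N.
Proof.
pose M : 'M[F2]_(#|Up b|, size (s b)) := \matrix_(u < #|Up b|, i < size (s b)) (i == enum_val u)%:R.
pose N : 'M[F2]_(size (dtgt n a b), #|Up b|) :=
  \matrix_(j < size (dtgt n a b), u < #|Up b|) (nth nu0 (dtgt n a b) j == partner (nth nu0 (s b) (enum_val u)))%:R.
apply: (@mulmx1_min_rank _ _ _ _ _ M N).
apply/matrixP => u u'; rewrite !mxE.
rewrite /M /N; under eq_bigr do rewrite !mxE. under eq_bigr do (under eq_bigr do rewrite !mxE; rewrite ord_delta). 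
rewrite (sum_nth nu0 (dtgt n a b) (fun y => dcoef F2 (nth nu0 (s b) (enum_val u)) y *
   (y == partner (nth nu0 (s b) (enum_val u')))%:R)).
rewrite seq_delta' ?uniq_dtgt ?partner_mem ?mem_nth ?nth_up //.
by rewrite dcoef_up_down ?nth_up ?up_partner ?nth_up // nth_up_inj.
Qed.

Lemma rank_ker_lb b : (#|Up b.+1| + #|Cr b| <= \rank (kermx (D b)))%N.
Proof.
pose K : 'M[F2]_(#|Up b.+1| + #|Cr b|, size (s b)) :=
  \matrix_(i < #|Up b.+1| + #|Cr b|, j < size (s b))
  match split i with inl u => D b.+1 (enum_val u) j | inr c => (j == enum_val c)%:R end.
pose N : 'M[F2]_(size (s b), #|Up b.+1| + #|Cr b|) :=
  \matrix_(j < size (s b), i < #|Up b.+1| + #|Cr b|)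
  match split i with
  | inl u => (nth nu0 (s b) j == partner (nth nu0 (s b.+1) (enum_val u)))%:R
  | inr c => (j == enum_val c)%:R end.
have HK : (K <= kermx (D b))%MS.
  rewrite sub_kermx; apply/eqP/matrixP => i l; rewrite !mxE /K.
  under eq_bigr do rewrite mxE.
  case: (split i) => [u|c] /=.
    by have := d2 n a b; move/matrixP/(_ (enum_val u) l); rewrite !mxE.
  by rewrite ord_delta mxE dcoef_crit ?nth_cr.
apply: leq_trans (mxrankS HK).
apply: (@mulmx1_min_rank _ _ _ _ _ 1%:M N); rewrite mul1mx.
apply/matrixP => i i'; rewrite !mxE /N /K.
under eq_bigr do rewrite !mxE.
have Hs : (i == i') = (split i == split i').
  by apply/eqP/eqP => [->//|/(congr1 unsplit)]; rewrite !splitK.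
rewrite Hs; case: (split i) => [u|c]; case: (split i') => [u'|c'] /=.
- under eq_bigr do rewrite mxE. rewrite /dtgt (sum_nth nu0 (s b) (fun y => dcoef F2 (nth nu0 (s b.+1) (enum_val u)) y *
   (y == partner (nth nu0 (s b.+1) (enum_val u')))%:R)).
  rewrite seq_delta' ?uniq_basis //; last by have := partner_mem (mem_nth nu0 (ltn_ord (enum_val u'))) (nth_up u').
  by rewrite dcoef_up_down ?nth_up ?up_partner ?nth_up // nth_up_inj.
- under eq_bigr do rewrite mulrC; rewrite ord_delta mxE.
  by rewrite dcoef_up_crit ?nth_up ?nth_cr.
- rewrite ord_delta; case: eqP => // E.
  by have := up_partner (nth_up u'); rewrite -E => /downcrit; rewrite nth_cr.
- rewrite ord_delta; congr ((nat_of_bool _)%:R).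
  by apply/eqP/eqP => [/enum_val_inj->|[->]].
Qed.

Lemma count_tri (t : seq (mon n)) : size t = (count (@up n) t + count (@down n) t + count (@crit n) t)%N.
Proof.
elim: t => //= x t ->.
case: (boolP (up x)) => [u|nu]; first by rewrite (updown u) (upcrit u) /=; lia.
case: (boolP (down x)) => [d|nd]; first by rewrite (downcrit d) /=; lia.
have := trichot x; rewrite (negbTE nu) (negbTE nd) /= => ->; lia.
Qed.

Definition uppartner (m : mon n) := if piv m is Some k then upart k m else m.

Lemma uppartnerP (m : mon n) : down m -> up (uppartner m) /\ partner (uppartner m) = m.
Proof. rewrite /uppartner => d; move: (d); rewrite /down; case E: (piv m) => [k|] // _; exact: down_upart. Qed.

Lemma count_shift b : count (@down n) (s b) = count (@up n) (s b.+1).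
Proof.
apply/eqP; rewrite eqn_leq; apply/andP; split.
  rewrite -!size_filter -(size_map uppartner); apply: uniq_leq_size.
    rewrite map_inj_in_uniq; first exact: filter_uniq (uniq_basis _ _ _).
  move=> x y.
    rewrite !mem_filter => /andP[dx _] /andP[dy _] E.
    by rewrite -(uppartnerP dx).2 -(uppartnerP dy).2 E.
  move=> z /mapP [x]; rewrite mem_filter => /andP[dx xs] ->.
  have [u p] := uppartnerP dx; rewrite mem_filter u /=.
  have [q t] := partner_deg u; rewrite p in q t.
  by rewrite mem_basis -q t; move: xs; rewrite mem_basis => /andP[/eqP -> /eqP ->]; rewrite !eqxx.
rewrite -!size_filter -(size_map (@partner n)); apply: uniq_leq_size.
  rewrite map_inj_in_uniq; first exact: filter_uniq (uniq_basis _ _ _).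
  move=> x y.
  by rewrite !mem_filter => /andP[ux _] /andP[uy _]; apply: partner_inj.
move=> z /mapP [x]; rewrite mem_filter => /andP[ux xs] ->.
by rewrite mem_filter up_partner //=; apply: (partner_mem xs ux).
Qed.

Lemma Hdim_crit b : Hdim F2 n a b = count (@crit n) (s b).
Proof.
rewrite /Hdim mxrank_ker.
have HD : (D b.+1 <= kermx (D b))%MS by rewrite sub_kermx d2.
rewrite (capmx_idPr HD).
have l1 := rank_lb b; have l2 := rank_lb b.+1; have l3 := rank_ker_lb b.
have l4 := rank_ker_lb b.+1.
rewrite mxrank_ker in l3 l4.
have := count_tri (s b); have := count_tri (s b.+1); have := count_shift b; have := count_shift b.+1.
rewrite /Up /Cr !card_nth in l1 l2 l3 l4.
have := rank_lb b.+2; rewrite /Up card_nth.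
have := mxrank_ker (D b.+1); have := rank_ker_lb b.+1.
have := rank_leq_row (D b); have := rank_leq_row (D b.+1); move: l1 l2 l3 l4; set r0 := \rank (Dmat _ n a b); set r1 := \rank (Dmat _ n a b.+1); set k1 := \rank (kermx (Dmat _ n a b.+1)); set S0 := size (s b); set S1 := size (s b.+1); set u0 := count (@up n) (s b); set u1 := count (@up n) (s b.+1); set u2 := count (@up n) (s b.+2); set w0 := count (@down n) (s b); set w1 := count (@down n) (s b.+1); set c0 := count (@crit n) (s b); set c1 := count (@crit n) (s b.+1). intros; lia.
Qed.

End P1e.


Notation Q := {poly {poly int}}.
Definition cf (p : Q) (x y : nat) : int := p`_x`_y.
Definition mono (c : int) (i j : nat) : Q := (c *: 'X^j)%:P * 'X^i.

Lemma cf_mono c i j x y : cf (mono c i j) x y = c * ((x == i) && (y == j))%:R.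
Proof.
rewrite /cf /mono coefMXn; case: ltnP => h.
  by rewrite coef0 (_ : (x == i) = false) ?mulr0 //; apply/negbTE; rewrite neq_ltn h.
rewrite coefC; have -> : (x - i == 0)%N = (x == i) by apply/eqP/eqP; lia.
case: (x == i); last by rewrite coef0 mulr0.
by rewrite coefZ coefXn.
Qed.

Lemma monoM c c' i i' j j' : mono c i j * mono c' i' j' = mono (c * c') (i + i') (j + j').
Proof.
rewrite /mono mulrACA -exprD; congr (_ * _).
by rewrite -polyCM -scalerAl -scalerAr -exprD scalerA.
Qed.

Lemma mono1 : mono 1 0 0 = 1.
Proof. by rewrite /mono !expr0 scale1r mulr1. Qed.

Lemma mono0 i j : mono 0 i j = 0.
Proof. by rewrite /mono scale0r mul0r. Qed.

Lemma monoX c i j k : mono c i j ^+ k = mono (c ^+ k) (k * i) (k * j).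
Proof.
elim: k => [|k IH]; first by rewrite expr0 mono1.
by rewrite exprS IH monoM -exprS !mulSn.
Qed.

Lemma cfM p q x y : cf (p * q) x y =
  \sum_(i < x.+1) \sum_(j < y.+1) cf p i j * cf q (x - i) (y - j).
Proof. rewrite /cf coefM coef_sum; apply: eq_bigr => i _; by rewrite coefM. Qed.

Lemma cfD p q x y : cf (p + q) x y = cf p x y + cf q x y.
Proof. by rewrite /cf !coefD. Qed.

Lemma cf_sum (I : Type) (r : seq I) (P : pred I) (F : I -> Q) x y :
  cf (\sum_(i <- r | P i) F i) x y = \sum_(i <- r | P i) cf (F i) x y.
Proof. by rewrite /cf !coef_sum. Qed.

Lemma cf1 x y : cf 1 x y = ((x == 0%N) && (y == 0%N))%:R.
Proof. by rewrite -mono1 cf_mono mul1r. Qed.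

Section Approx.
Variables A B : nat.

Definition approx (f : ps) (p : Q) :=
  forall x y, (x <= A)%N -> (y <= B)%N -> f x y = cf p x y.
Definition tr (p q : Q) :=
  forall x y, (x <= A)%N -> (y <= B)%N -> cf p x y = cf q x y.

Lemma approx_mul f g p q : approx f p -> approx g q -> approx (psmul f g) (p * q).
Proof.
move=> hf hg x y hx hy; rewrite /psmul cfM.
apply: eq_bigr => i _; apply: eq_bigr => j _.
have hi : (i <= A)%N by apply: leq_trans hx; rewrite -ltnS.
have hj : (j <= B)%N by apply: leq_trans hy; rewrite -ltnS.
have hx' : (x - i <= A)%N by apply: leq_trans (leq_subr _ _) hx.
have hy' : (y - j <= B)%N by apply: leq_trans (leq_subr _ _) hy.
by rewrite hf // hg.
Qed.

Lemma tr_mul p p' q q' : tr p p' -> tr q q' -> tr (p * q) (p' * q').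
Proof.
move=> hf hg x y hx hy; rewrite !cfM.
apply: eq_bigr => i _; apply: eq_bigr => j _.
have hi : (i <= A)%N by apply: leq_trans hx; rewrite -ltnS.
have hj : (j <= B)%N by apply: leq_trans hy; rewrite -ltnS.
have hx' : (x - i <= A)%N by apply: leq_trans (leq_subr _ _) hx.
have hy' : (y - j <= B)%N by apply: leq_trans (leq_subr _ _) hy.
by rewrite hf // hg.
Qed.

Lemma tr_refl p : tr p p. Proof. by []. Qed.
Lemma tr_sym p q : tr p q -> tr q p. Proof. by move=> h x y hx hy; rewrite h. Qed.
Lemma tr_trans p q r : tr p q -> tr q r -> tr p r.
Proof. by move=> h1 h2 x y hx hy; rewrite h1 // h2. Qed.
Lemma approx_tr f p q : approx f p -> tr p q -> approx f q.
Proof. by move=> h1 h2 x y hx hy; rewrite h1 // h2. Qed.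
Lemma tr_eq p q : p = q -> tr p q. Proof. by move=> ->. Qed.

Lemma approx1 : approx ps1 1.
Proof. by move=> x y _ _; rewrite cf1 /ps1 natz. Qed.

Lemma approx_prod m (F : 'I_m -> ps) (G : 'I_m -> Q) :
  (forall i, approx (F i) (G i)) ->
  approx (\big[psmul/ps1]_(i < m) F i) (\prod_(i < m) G i).
Proof.
move=> h; apply: (big_ind2 approx); [exact: approx1 | | by move=> i _; exact: h].
by move=> ? ? ? ?; exact: approx_mul.
Qed.

Lemma tr_prod m (P : pred 'I_m) (F G : 'I_m -> Q) :
  (forall i, P i -> tr (F i) (G i)) ->
  tr (\prod_(i < m | P i) F i) (\prod_(i < m | P i) G i).
Proof.
move=> h; apply: (big_ind2 tr); [exact: tr_refl | | exact: h].
by move=> ? ? ? ?; exact: tr_mul.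
Qed.

Lemma approx_1p c al be : approx (ps1p c al be) (1 + mono c al be).
Proof.
move=> x y _ _; rewrite cfD cf1 cf_mono /ps1p /ps1 natz; congr (_ + _).
by case: ifP; rewrite ?mulr1 ?mulr0.
Qed.

Lemma approx_geom c al be : (0 < al)%N ->
  approx (psgeom c al be) (\sum_(k < A.+1) mono c al be ^+ k).
Proof.
move=> hal x y hx _; rewrite cf_sum.
under eq_bigr do rewrite monoX cf_mono.
rewrite /psgeom.
case: (boolP (al %| x)%N) => hd /=.
  have hk : (x %/ al < A.+1)%N by rewrite ltnS; apply: leq_trans hx; exact: leq_div.
  rewrite (bigD1 (Ordinal hk)) //= big1 ?addr0.
    by rewrite mulnC divnK // eqxx /=; case: ifP; rewrite ?mulr1 ?mulr0.
  move=> k hk'; rewrite (_ : (x == k * al)%N = false) ?mulr0 //.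
  apply/negP => /eqP e; move: hk'; rewrite -(inj_eq val_inj) /= e mulnK //.
  by rewrite eqxx.
rewrite big1 // => k _; rewrite (_ : (x == k * al)%N = false) ?mulr0 //.
apply/negP => /eqP e; move: hd; rewrite e dvdn_mull //.
Qed.

Lemma cf_high (r : Q) c I J x y : (x < I)%N -> cf (r * mono c I J) x y = 0.
Proof. by move=> h; rewrite /cf /mono mulrA coefMXn h coef0. Qed.

Lemma tr_high p r c I J : (A < I)%N -> tr (p + r * mono c I J) p.
Proof.
move=> h x y hx _; rewrite cfD cf_high ?addr0 //; exact: leq_ltn_trans hx h.
Qed.

End Approx.


Lemma monoN c i j : mono (- c) i j = - mono c i j.
Proof. by rewrite /mono scaleNr polyCN mulNr. Qed.

Lemma even_prod (F : nat -> Q) m :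
  \prod_(i < m | ~~ odd i) F i = \prod_(j < uphalf m) F (2 * j)%N.
Proof.
elim: m => [|m IH]; first by rewrite !big_ord0.
rewrite big_mkcond big_ord_recr /= -big_mkcond IH.
have U1 : uphalf m.+1 = (m./2).+1 by [].
have U2 := uphalf_half m.
have D := odd_double_half m.
case: (boolP (odd m)) => om /=.
  by rewrite mulr1 U2 om.
rewrite big_ord_recr /=; rewrite (negbTE om) /= in U2 D.
rewrite add0n in U2; rewrite add0n in D; rewrite U2; congr (_ * F _); rewrite -{1}D; lia.
Qed.

Section Alg.
Variables A B : nat.
Local Notation tr := (tr A B).
Definition geo (y : Q) := \sum_(k < A.+1) y ^+ k.

Lemma T1 c al be : (0 < al)%N ->
  tr ((1 - mono c al be ^+ 2) * geo (mono c al be)) (1 + mono c al be).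
Proof.
move=> hal; set y := mono c al be.
have -> : (1 - y ^+ 2) * geo y = (1 + y) + (- (1 + y)) * mono (c ^+ A.+1) (A.+1 * al) (A.+1 * be).
  rewrite -monoX /geo.
  have H := subrX1 y A.+1.
  have -> : (1 - y ^+ 2) = - (1 + y) * (y - 1) by ring.
  by rewrite -mulrA -H; ring.
by apply: tr_high; exact: leq_pmulr.
Qed.

Lemma T2 c al be : (0 < al)%N ->
  tr ((1 + mono c al be) * geo (- mono c al be)) 1.
Proof.
move=> hal; set y := mono c al be.
have -> : (1 + y) * geo (- y) = 1 + (- 1) * mono ((- c) ^+ A.+1) (A.+1 * al) (A.+1 * be).
  rewrite -monoX monoN /geo.
  have H := subrX1 (- y) A.+1.
  have -> : (1 + y) = - ((- y) - 1) by ring.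
  by rewrite [in LHS]mulNr -H -/y; ring.
by apply: tr_high; exact: leq_pmulr.
Qed.

Variable n : nat.
Hypothesis hn : (0 < n)%N.
Definition xv (i : nat) := mono 1 (2 * i + 2) (2 * i).
Definition xi (i : nat) := mono 1 (2 * i + 4) (2 * i + 1).
Local Notation h := (uphalf n).

Definition Pp := (\prod_(i < n) ((1 + xi i) * geo (xv i))) *
   (\prod_(i < (n.-1)./2.+1) ((1 + mono (-1) (4 * i + 4) (4 * i)) *
                               geo (mono (-1) (4 * i + 4) (4 * i + 1)))).

Definition Xf (l : nat) := if (l < h)%N then 1 + xv l else geo (xv l).
Definition Xif (l : nat) := if odd l then 1 + xi l else 1.
Definition Qc := \prod_(l < n) (Xf l * Xif l).

Lemma approx_P : approx A B (Pseries n) Pp.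
Proof.
apply: approx_mul; apply: approx_prod => i; apply: approx_mul.
- exact: approx_1p.
- by apply: approx_geom; lia.
- exact: approx_1p.
- by apply: approx_geom; lia.
Qed.

Lemma hE : (n.-1)./2.+1 = h.
Proof. by case: n hn. Qed.

Lemma hle : (h <= n)%N.
Proof. by rewrite leq_uphalf_double -addnn leq_addl. Qed.

Lemma tr_PQ : tr Pp Qc.
Proof.
rewrite /Pp /Qc hE.
have e2 : \prod_(i < h) ((1 + mono (-1) (4 * i + 4) (4 * i)) * geo (mono (-1) (4 * i + 4) (4 * i + 1)))
   = \prod_(i < h) ((1 - xv i ^+ 2) * geo (- xi (2 * i))).
  apply: eq_bigr => i _; rewrite /xv /xi monoX !monoN expr1n.
  congr ((1 - mono _ _ _) * geo (- mono _ _ _)); lia.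
rewrite e2 [\prod_(i < n) ((1 + xi i) * geo (xv i))]big_split /=.
rewrite [\prod_(i < h) ((1 - xv i ^+ 2) * geo (- xi (2 * i)))]big_split /=.
rewrite [\prod_(i < n) (1 + xi i)](bigID (fun i : 'I_n => odd i)) /= (even_prod (fun i => 1 + xi i) n).
rewrite [\prod_(i < n) geo (xv i)](bigID (fun i : 'I_n => (i < h)%N)) /=.
rewrite -(big_ord_widen_cond _ (fun _ => true) (fun i => geo (xv i)) hle).
rewrite [\prod_(i < n) (Xf i * Xif i)]big_split /=.
rewrite [\prod_(i < n) Xf i](bigID (fun i : 'I_n => (i < h)%N)) /=.
rewrite -(big_ord_widen_cond _ (fun _ => true) (fun i => Xf i) hle).
have eX1 : \prod_(i < h) Xf i = \prod_(i < h) (1 + xv i).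
  by apply: eq_bigr => i _; rewrite /Xf ltn_ord.
have eX2 : \prod_(i < n | ~~ (i < h)%N) Xf i = \prod_(i < n | ~~ (i < h)%N) geo (xv i).
  by apply: eq_bigr => i /negbTE hi; rewrite /Xf hi.
have eO : \prod_(i < n) Xif i = \prod_(i < n | odd i) (1 + xi i).
  by rewrite [RHS]big_mkcond; apply: eq_bigr => i _; rewrite /Xif.
rewrite eX1 eX2 eO.
set O := \prod_(i < n | odd i) (1 + xi i).
set E := \prod_(j < h) (1 + xi (2 * j)%N).
set G1 := \prod_(i < h) geo (xv i).
set G2 := \prod_(i < n | ~~ (i < h)%N) geo (xv i).
set X2 := \prod_(i < h) (1 - xv i ^+ 2).
set N := \prod_(i < h) geo (- xi (2 * i)).
have eY : \prod_(i < h) ((1 - xv i ^+ 2) * geo (xv i)) = X2 * G1 by rewrite big_split.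
have eZ : \prod_(i < h) ((1 + xi (2 * i)%N) * geo (- xi (2 * i))) = E * N by rewrite big_split.
have -> : O * E * (G1 * G2) * (X2 * N) =
  (O * G2) * (\prod_(i < h) ((1 - xv i ^+ 2) * geo (xv i))) *
  (\prod_(i < h) ((1 + xi (2 * i)%N) * geo (- xi (2 * i)))) by rewrite eY eZ; ring.
have -> : \prod_(i < h) (1 + xv i) * G2 * O = (O * G2) * \prod_(i < h) (1 + xv i) * 1 by ring.
apply: tr_mul; first apply: tr_mul; first exact: tr_refl.
  by apply: tr_prod => i _; rewrite /xv; apply: T1; lia.
apply: (@tr_trans _ _ _ (\prod_(i < h) (1 : Q))); last by apply: tr_eq; rewrite big1.
by apply: tr_prod => i _; rewrite /xi; apply: T2; lia.
Qed.

End Alg.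


Section Fin.
Variables n a b : nat.
Hypothesis hn : (0 < n)%N.
Local Notation h := (uphalf n).

Definition Xt (l : nat) := \sum_(e < a.+1) (if (l < h)%N ==> (e <= 1)%N then xv l ^+ e else 0).
Definition Xs (l : nat) := \sum_(s : bool) (if odd l || ~~ s then xi l ^+ s else 0).
Definition Qx := \prod_(l < n) (Xt l * Xs l).

Lemma tr_Xf l : tr a b (Xf a n l) (Xt l).
Proof.
rewrite /Xf /Xt; case: (boolP (l < h)%N) => hl /=; last by apply: tr_eq.
case: a => [|a'].
  rewrite big_ord_recl big_ord0 /= expr0 addr0.
  by rewrite -[xv l]mul1r /xv; apply: tr_high; lia.
apply: tr_eq; rewrite big_ord_recl big_ord_recl big1 ?addr0 /=; first by rewrite expr0 expr1.
by move=> i _.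
Qed.

Lemma Xs_eq l : Xif l = Xs l.
Proof. rewrite /Xif /Xs big_bool /= orbT ?orbF expr1 expr0; case: (odd l); by rewrite ?add0r // addrC. Qed.

Lemma tr_QQ : tr a b (Qc a n) Qx.
Proof. by apply: tr_prod => l _; rewrite Xs_eq; apply: tr_mul; [exact: tr_Xf | exact: tr_refl]. Qed.

End Fin.


Lemma prod_mono_seq (I : Type) (r : seq I) (c : I -> int) (p q : I -> nat) :
  \prod_(i <- r) mono (c i) (p i) (q i) =
  mono (\prod_(i <- r) c i) (\sum_(i <- r) p i) (\sum_(i <- r) q i).
Proof.
elim: r => [|x r IH]; first by rewrite !big_nil mono1.
by rewrite !big_cons IH monoM.
Qed.

Lemma prod_bool (I : finType) (P : pred I) :
  \prod_(i : I) ((P i : nat)%:R : int) = ([forall i, P i] : nat)%:R.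
Proof.
case: (boolP [forall i, P i]) => [/forallP H|/forallPn [i0 Hi0]].
  by rewrite big1 // => i _; rewrite H.
by rewrite (bigD1 i0) //= (negbTE Hi0) mul0r.
Qed.

Lemma if_mono (P : bool) c al be e :
  (if P then mono c al be ^+ e else 0) = mono ((P : nat)%:R * c ^+ e) (e * al) (e * be).
Proof. by case: P; rewrite ?mul1r ?mul0r ?mono0 // monoX. Qed.

Lemma count_sum (T : Type) (P : pred T) (s : seq T) :
  count P s = (\sum_(x <- s) (P x : nat))%N.
Proof. by elim: s => [|x s IH]; rewrite ?big_nil ?big_cons //= IH. Qed.

Section Cnt.
Variables n a b : nat.
Local Notation h := (uphalf n).
Local Notation T1 := {ffun 'I_n -> 'I_a.+1}.

Definition cX (f : T1) : int := \prod_(l < n) ((((l < h)%N ==> (f l <= 1)%N)) : nat)%:R.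
Definition qX (f : T1) := (\sum_(l < n) f l * (2 * l + 2))%N.
Definition tX (f : T1) := (\sum_(l < n) f l * (2 * l))%N.
Definition cS (g : {ffun 'I_n -> bool}) : int := \prod_(l < n) ((odd l || ~~ g l) : nat)%:R.
Definition qS (g : {ffun 'I_n -> bool}) := (\sum_(l < n) g l * (2 * l + 4))%N.
Definition tS (g : {ffun 'I_n -> bool}) := (\sum_(l < n) g l * (2 * l + 1))%N.

Lemma prodXt : \prod_(l < n) Xt n a l = \sum_(f : T1) mono (cX f) (qX f) (tX f).
Proof.
rewrite /Xt bigA_distr_bigA /=; apply: eq_bigr => f _.
under eq_bigr do rewrite /xv if_mono expr1n mulr1.
by rewrite prod_mono_seq.
Qed.

Lemma prodXs : \prod_(l < n) Xs l = \sum_(g : {ffun 'I_n -> bool}) mono (cS g) (qS g) (tS g).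
Proof.
rewrite /Xs bigA_distr_bigA /=; apply: eq_bigr => g _.
under eq_bigr do rewrite /xi if_mono expr1n mulr1.
by rewrite prod_mono_seq.
Qed.

Lemma cf_Qx : cf (Qx n a) a b = \sum_(f : T1) \sum_(g : {ffun 'I_n -> bool})
   cX f * cS g * (((qX f + qS g == a)%N && (tX f + tS g == b)%N) : nat)%:R.
Proof.
rewrite /Qx big_split /= prodXt prodXs mulr_suml cf_sum; apply: eq_bigr => f _.
rewrite mulr_sumr cf_sum; apply: eq_bigr => g _.
by rewrite monoM cf_mono (eq_sym a) (eq_sym b).
Qed.

End Cnt.


Section Cnt2.
Variables n a b : nat.
Local Notation h := (uphalf n).
Local Notation T1 := {ffun 'I_n -> 'I_a.+1}.

Lemma critE (m : mon n) : crit m = [forall k, ~~ bad m k].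
Proof.
rewrite /crit; apply/eqP/forallP => [/pivN H k|H]; first exact: H.
by apply/pivN => k; exact: H.
Qed.

Lemma crit_tomon (f : T1) (S : {set 'I_n}) :
  crit (tomon (f, S)) = [forall l : 'I_n, (l < h)%N ==> (f l <= 1)%N] &&
                        [forall l : 'I_n, odd l || (l \notin S)].
Proof.
rewrite critE; apply/forallP/andP => [H|[/forallP H1 /forallP H2] k]; last first.
  rewrite /bad /=; case: (boolP (odd k)) => //= ek.
  have := H2 k; rewrite (negbTE ek) /= => /negbTE ->; rewrite /=.
  rewrite ffunE -leqNgt.
  have hk : (hf k < h)%N by rewrite /= gtn_uphalf_double ev_half.
  by have := H1 (hf k); rewrite hk.
split; apply/forallP => l.
  apply/implyP => hl; have hk : (l.*2 < n)%N by rewrite -gtn_uphalf_double.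
  have := H (Ordinal hk); rewrite /bad /= odd_double /= negb_or => /andP[_].
  rewrite ffunE -leqNgt.
  by have -> : hf (Ordinal hk) = l by apply/val_inj; rewrite /= doubleK.
case: (boolP (odd l)) => //= el.
by have := H l; rewrite /bad el /= negb_or => /andP[].
Qed.

Lemma qdeg_tomon (f : T1) (S : {set 'I_n}) :
  qdeg (tomon (f, S)) = (qX f + qS [ffun l => l \in S])%N.
Proof.
rewrite /qdeg /qX /qS /=; congr (_ + _)%N.
  by apply: eq_bigr => l _; rewrite ffunE mulnC.
rewrite big_mkcond; apply: eq_bigr => l _; rewrite ffunE.
by case: (l \in S); rewrite ?mul1n ?mul0n.
Qed.

Lemma tdeg_tomon (f : T1) (S : {set 'I_n}) :
  tdeg (tomon (f, S)) = (tX f + tS [ffun l => l \in S])%N.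
Proof.
rewrite /tdeg /tX /tS /=; congr (_ + _)%N.
  by apply: eq_bigr => l _; rewrite ffunE mulnC.
rewrite big_mkcond; apply: eq_bigr => l _; rewrite ffunE.
by case: (l \in S); rewrite ?mul1n ?mul0n.
Qed.

Lemma term_eq (f : T1) (S : {set 'I_n}) :
  ((crit (tomon (f, S)) && ((qdeg (tomon (f, S)) == a) && (tdeg (tomon (f, S)) == b))) : nat)%:R
  = cX f * cS [ffun l => l \in S] *
    (((qX f + qS [ffun l => l \in S] == a)%N && (tX f + tS [ffun l => l \in S] == b)%N) : nat)%:R :> int.
Proof.
rewrite crit_tomon qdeg_tomon tdeg_tomon /cX /cS !prod_bool.
have -> : [forall l : 'I_n, odd l || ~~ [ffun l0 => l0 \in S] l] = [forall l : 'I_n, odd l || (l \notin S)].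
  by apply: eq_forallb => l; rewrite ffunE.
case: [forall _, _]; case: [forall _, _]; by rewrite /= ?mul1r ?mul0r.
Qed.

Lemma count_crit : ((count (@crit n) (basis n a b))%:Z) = \sum_(f : T1) \sum_(g : {ffun 'I_n -> bool})
   cX f * cS g * (((qX f + qS g == a)%N && (tX f + tS g == b)%N) : nat)%:R.
Proof.
rewrite /basis count_filter /image_mem count_map count_sum big_enum /=.
rewrite -natz natr_sum.
have -> : \sum_(f : T1) \sum_(g : {ffun 'I_n -> bool})
   cX f * cS g * (((qX f + qS g == a)%N && (tX f + tS g == b)%N) : nat)%:R
  = \sum_(f : T1) \sum_(S : {set 'I_n})
   cX f * cS [ffun l => l \in S] * (((qX f + qS [ffun l => l \in S] == a)%N &&
        (tX f + tS [ffun l => l \in S] == b)%N) : nat)%:R.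
  apply: eq_bigr => f _.
  rewrite (reindex (fun S : {set 'I_n} => [ffun l => l \in S])) //.
  exists (fun g : {ffun 'I_n -> bool} => [set l | g l]) => [S _|g _].
    by apply/setP => l; rewrite inE ffunE.
  by apply/ffunP => l; rewrite !ffunE inE.
rewrite pair_big /=; apply: eq_big => [[f S]|[f S] _] //=.
by rewrite -term_eq.
Qed.

End Cnt2.

Theorem mainTheorem1 (n : nat) (hn : (0 < n)%N) (a b : nat) :
  ((Hdim [the fieldType of 'F_2] n a b)%:Z = Pseries n a b)%R.
Proof.
rewrite Hdim_crit count_crit -cf_Qx.
rewrite (@approx_P a b n hn a b (leqnn a) (leqnn b)).
rewrite (@tr_PQ a b n hn a b (leqnn a) (leqnn b)).
by rewrite (@tr_QQ n a b hn a b (leqnn a) (leqnn b)).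
Qed.
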